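(* Assume the following statement holds: for every base $b>2$, every integer $n$ with $1<n<b$, and every symmetric $(n,b)$-palintiple with carries $c_k,\ldots,c_0$, one has $c_j\equiv 0 \pmod{n-1}$ for all $0\le j\le k$. Then, for integers $b>2$ and $1<n<b$, an $(n,b)$-palintiple is asymmetric if and only if $\gcd(b-n,n^2-1)\le n-1$ and $n+1$ does not divide $b$.
   Context: Let $b>2$ be an integer base and write $(d_k,d_{k-1},\ldots,d_0)_b=\sum_{j=0}^k d_j b^j$ with $0\le d_j<b$. A natural number $p=(d_k,\ldots,d_0)_b$ with $d_k\neq 0$ and $d_0\neq 0$ that is not a base-$b$ palindrome is an $(n,b)$-palintiple if $(d_k,\ldots,d_0)_b=n\,(d_0,d_1,\ldots,d_k)_b$ for an integer $n$ with $1<n<b$. Its carries $c_0,\ldots,c_{k+1}$ are the carries arising in the base-$b$ multiplication of $(d_0,\ldots,d_k)_b$ by $n$: $c_0=0$ and $n d_{k-j}+c_j=d_j+b\,c_{j+1}$ for $0\le j\le k$ (so $c_{k+1}=0$). The palintiple is symmetric if $c_j=c_{k-j}$ for all $0\le j\le k$, shifted-symmetric if $c_j=c_{k-j+1}$ for all $0\le j\le k$, and asymmetric if it is neither symmetric nor shifted-symmetric. *)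

(* Defs.v *)
From mathcomp Require Import all_boot.
Set Implicit Arguments. Unset Strict Implicit. Unset Printing Implicit Defensive.

(* A base-b digit string is represented little-endian as
   s = [:: d_0; d_1; ...; d_k], so k = (size s).-1 and
   (d_k,...,d_0)_b = \sum_j d_j b^j. *)

Definition digit (s : seq nat) (j : nat) : nat := nth 0 s j.

Definition topidx (s : seq nat) : nat := (size s).-1.

Definition numval (b : nat) (s : seq nat) : nat :=
  \sum_(j < size s) digit s j * b ^ j.

Definition palintiple (n b : nat) (s : seq nat) : Prop :=
  [/\ 0 < size s, all (fun d => d < b) s, 1 < n < b &
      [/\ digit s (topidx s) != 0, digit s 0 != 0, rev s != s &
           numval b s = n * numval b (rev s)]].

(* Carries of the base-b multiplication of (d_0,...,d_k)_b by n:
   c_0 = 0 and c_{j+1} = (n d_{k-j} + c_j) div b, i.e. the unique c_{j+1}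
   with n d_{k-j} + c_j = d'_j + b c_{j+1}, 0 <= d'_j < b. *)
Fixpoint carry (n b : nat) (s : seq nat) (j : nat) : nat :=
  match j with
  | 0 => 0
  | j'.+1 => (n * digit s (topidx s - j') + carry n b s j') %/ b
  end.

Definition symmetric_pal (n b : nat) (s : seq nat) : Prop :=
  forall j, j <= topidx s -> carry n b s j = carry n b s (topidx s - j).

Definition shifted_symmetric_pal (n b : nat) (s : seq nat) : Prop :=
  forall j, j <= topidx s -> carry n b s j = carry n b s (topidx s - j + 1).

Definition asymmetric_pal (n b : nat) (s : seq nat) : Prop :=
  ~ symmetric_pal n b s /\ ~ shifted_symmetric_pal n b s.

Definition symmetric_carries_divisible : Prop :=
  forall (b n : nat) (s : seq nat),
    2 < b -> 1 < n < b -> palintiple n b s -> symmetric_pal n b s ->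
    forall j, j <= topidx s -> carry n b s j = 0 %[mod n.-1].

(* Main.v *)
Require Import Defs.
From mathcomp Require Import all_boot zify.

Lemma modq a a' q x y : a < q -> a' < q -> a + q*x = a' + q*y -> a = a' /\ x = y.
Proof. move=> ha ha' e.
have e1: a = a'. by have := congr1 (modn^~ q) e; rewrite !(mulnC q) !(addnC _ (_*q)) !modnMDl !modn_small.
subst; split=>//. nia. Qed.

Lemma foo (b c d P r C n: nat) : n*d + c = r + b*C -> c*P + n*(d*P) = r*P + C*(b*P).
Proof. nia. Qed.

Lemma sum_shift (b m : nat) (x : nat -> nat) X :
  \sum_(i<m.+1) x i * b^i + X * b^(m.+1) = x 0 + b * (\sum_(i<m) x i.+1 * b^i + X * b^m).
Proof.
rewrite big_ord_recl /= expn0 muln1 -addnA; congr (_+_).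
rewrite mulnDr big_distrr /= expnS; congr (_+_); last by rewrite mulnCA.
by apply: eq_bigr => i _; rewrite /bump /= add1n expnS mulnCA.
Qed.

Lemma base_uniq b m : 0 < b -> forall (x y : nat -> nat) X Y,
  (forall i, x i < b) -> (forall i, y i < b) ->
  \sum_(i<m) x i * b^i + X * b^m = \sum_(i<m) y i * b^i + Y * b^m ->
  (forall i, i < m -> x i = y i) /\ X = Y.
Proof.
move=> b0; elim: m => [|m IH] x y X Y hx hy.
  by rewrite !big_ord0 !expn0 !muln1 !add0n.
rewrite !sum_shift => /modq [] // e0.
move=> /(IH (fun i => x i.+1) (fun i => y i.+1)) [] // H1 H2.
by split=> // -[|i] // /H1.
Qed.

Lemma digit_lt (b : nat) (s : seq nat) : 0 < b -> all (fun d => d < b) s -> forall j, digit s j < b.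
Proof.
move=> b0 /allP H j; rewrite /digit; case: (ltnP j (size s)) => hj.
  by apply: H; apply: mem_nth.
by rewrite nth_default.
Qed.

Lemma carry_lt (n b : nat) (s : seq nat) : 0 < n < b -> (forall j, digit s j < b) -> forall j, carry n b s j < n.
Proof.
move=> /andP[n0 nb] hd; elim=> [|j IH] //=.
rewrite ltn_divLR; last lia.
have := hd (topidx s - j); nia.
Qed.

Lemma carry_eqs (n b : nat) (s : seq nat) : palintiple n b s ->
  carry n b s (topidx s).+1 = 0 /\
  forall j, j <= topidx s ->
   n * digit s (topidx s - j) + carry n b s j = digit s j + b * carry n b s j.+1.
Proof.
case=> hs hall /andP[n1 nb] [_ _ _ hv].
have b0 : 0 < b by lia.
have hd := @digit_lt b s b0 hall.
set k := topidx s.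
have sz : size s = k.+1 by rewrite /k /topidx; lia.
pose r j := (n * digit s (k - j) + carry n b s j) %% b.
have step j : n * digit s (k - j) + carry n b s j = r j + b * carry n b s j.+1.
  by rewrite /r /= [LHS](divn_eq _ b) mulnC addnC.
have inv j : n * \sum_(i<j) digit s (k-i) * b^i = \sum_(i<j) r i * b^i + carry n b s j * b^j.
  elim: j => [|j IH]; first by rewrite !big_ord0 muln0 mul0n.
  rewrite !big_ord_recr /= mulnDr IH -!addnA; congr (_ + _).
  change ((n * digit s (k - j) + carry n b s j) %/ b) with (carry n b s j.+1).
  by rewrite expnS; apply: foo (step j).
have hrev : numval b (rev s) = \sum_(i< k.+1) digit s (k-i) * b^i.
  rewrite /numval size_rev sz; apply: eq_bigr => i _.
  by rewrite /digit nth_rev ?sz // subSS.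
have := inv k.+1; rewrite -hrev -hv /numval sz => E.
have := @base_uniq b k.+1 b0 (digit s) r 0 (carry n b s k.+1) hd
  (fun i => ltn_pmod _ b0).
rewrite mul0n addn0 E => /(_ erefl) [H1 H2]; split=> // j hj.
by rewrite step H1.
Qed.

Lemma coprime_sq n : 1 < n -> coprime (n ^ 2 - 1) n.
Proof.
move=> n1; rewrite /coprime gcdnC.
have -> : n ^ 2 - 1 = n.-1 * n + n.-1 by case: n n1 => // m _; rewrite expnS expn1; lia.
by rewrite gcdnMDl; case: n n1 => // m _; exact: coprimeSn.
Qed.

Lemma cancel_cop g n x y X Y : coprime g n -> n <= g -> x < n -> y < n ->
  n*x + g*X = n*y + g*Y -> x = y.
Proof.
move=> cg ng.
wlog le: x y X Y / x <= y.
  move=> W hx hy e; case: (leqP x y) => h; first exact: (W x y X Y h hx hy e).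
  by symmetry; apply: (W y x Y X (ltnW h) hy hx (esym e)).
move=> hx hy e.
have d : g %| n * (y - x).
  apply/dvdnP; exists (X - Y); rewrite mulnBr mulnBl; nia.
move: d; rewrite Gauss_dvdr // => d.
case: (posnP (y - x)) => h; first lia.
have := dvdn_leq h d; lia.
Qed.

Theorem corollary2 :
  symmetric_carries_divisible ->
  forall (b n : nat) (s : seq nat),
    2 < b -> 1 < n < b -> palintiple n b s ->
    (asymmetric_pal n b s <->
       (gcdn (b - n) (n ^ 2 - 1) <= n - 1) /\ ~ (n.+1 %| b)).
Proof.
move=> Hyp b n s b2 hn hp.
have hp' := hp; case: hp' => hs hall hn' [hdk hd0 hrev hv].
have /andP[n1 nb] := hn.
have [ck1 E] := @carry_eqs n b s hp.
set k := topidx s in ck1 E hdk.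
have hd := @digit_lt b s (ltnW (ltnW b2)) hall.
have cl : forall j, carry n b s j < n.
  by apply: (@carry_lt n b s) => //; rewrite nb andbT; lia.
have k1 : 0 < k.
  rewrite /k /topidx; move: hrev; case Es: s => [|x [|y t]] //=.
  by rewrite eqxx.
set c := carry n b s in ck1 E cl.
set g := gcdn (b - n) (n ^ 2 - 1).
have A : symmetric_pal n b s -> n.+1 %| b.
  move=> hsym.
  have ck0 : c k = 0 by have := hsym 0 (leq0n _); rewrite subn0 /= => h; rewrite /c /k -h.
  have e0 := E 0 (leq0n _); have ek := E k (leqnn _).
  have c00 : c 0 = 0 by [].
  rewrite subn0 c00 addn0 in e0; rewrite subnn ck1 ck0 muln0 !addn0 in ek.
  have := Hyp b n s b2 hn hp hsym 1 k1; rewrite -/c => hm.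
  have c01 : c 1 = 0 \/ c 1 = n.-1.
    have := cl 1; move: hm; rewrite -/c.
    move: (c 1) => x; rewrite mod0n => hm hx.
    have := divn_eq x n.-1; rewrite hm addn0 => ex.
    have hq : x %/ n.-1 <= 1 by rewrite leq_divLR; lia.
    move: ex hq; case: (x %/ n.-1) => [|[|q]] ex hq; lia.
  have c1 : c 1 = n.-1.
    case: c01 => // h0.
    exfalso; move: e0; rewrite h0 muln0 addn0 -ek.
    have : digit s 0 > 0 by rewrite lt0n.
    nia.
  rewrite c1 -ek in e0.
  apply/dvdnP; exists (digit s 0); nia.
have B : shifted_symmetric_pal n b s -> n - 1 < g.
  move=> hsh.
  have ck : c 1 = c k by have := hsh 1 k1; rewrite subnK.
  have e0 := E 0 (leq0n _); have ek := E k (leqnn _).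
  have c00 : c 0 = 0 by [].
  rewrite subn0 c00 addn0 in e0; rewrite subnn ck1 muln0 addn0 -ck in ek.
  have key : (n ^ 2 - 1) * digit s 0 = (b - n) * c 1.
    rewrite -ek in e0; rewrite mulnBl mulnBl expnS expn1; nia.
  have d0 : 0 < digit s 0 by rewrite lt0n.
  have c10 : 0 < c 1.
    case: (posnP (c 1)) => // h; move: key; rewrite h muln0 => /eqP.
    rewrite muln_eq0 (negbTE hd0) orbF; rewrite expnS expn1; nia.
  have dv : n ^ 2 - 1 %| g * c 1.
    by rewrite /g muln_gcdl dvdn_gcd -key dvdn_mulr // dvdn_mulr.
  have hg : 0 < g.
    rewrite /g gcdn_gt0; apply/orP; left; lia.
  have := dvdn_leq (_ : 0 < g * c 1) dv; rewrite muln_gt0 hg c10 => /(_ isT).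
  have := cl 1; rewrite expnS expn1; nia.
have C1 : n.+1 %| b -> symmetric_pal n b s.
  move=> /dvdnP [m hm] j hj.
  have ej := E j hj; have ekj := E (k - j) (leq_subr _ _).
  rewrite subKn // in ekj.
  have [] // := @modq (c j) (c (k - j)) n.+1 (digit s (k - j) + m * c (k - j).+1)
                (digit s j + m * c j.+1) (ltnW (cl _)) (ltnW (cl _)).
  rewrite hm in ej ekj; nia.
have C2 : n - 1 < g -> shifted_symmetric_pal n b s.
  move=> hg.
  have cop : coprime g n.
    by apply: (coprime_dvdl (dvdn_gcdr _ _)); apply: coprime_sq.
  have ng : n <= g by lia.
  have /dvdnP [t ht] : g %| b - n by exact: dvdn_gcdl.
  have /dvdnP [u hu] : g %| n ^ 2 - 1 by exact: dvdn_gcdr.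
  have hb : b = n + t * g by lia.
  have hn2 : n * n = 1 + u * g by move: hu; rewrite expnS expn1; lia.
  change (forall j, j <= k -> c j = c (k - j + 1)).
  elim=> [|j IH] hj; first by rewrite subn0 addn1 ck1.
  have IH' := IH (ltnW hj).
  have ej := E j (ltnW hj); have ekj := E (k - j) (leq_subr _ _).
  rewrite subKn ?(ltnW hj) // in ekj.
  have -> : k - j.+1 + 1 = k - j by lia.
  have e2 : k - j + 1 = (k - j).+1 by lia.
  rewrite e2 in IH'.
  apply: (@cancel_cop g n _ _ (u * c j + t * n * c j + t * c j.+1) (u * digit s j)) => //.
  rewrite hb in ej ekj; nia.
split.
  case=> ns nsh; split; last by move=> h; exact: ns (C1 h).
  by rewrite leqNgt; apply/negP => h; exact: nsh (C2 h).
case=> hg hnd; split; first by move=> /A.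
by move=> /B; lia.
Qed.
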